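(* For all integers $n\geq 1$ and all real $x\in(0,2\pi/3)$, $$\sum_{k=1}^n (n-k+1)(n-k+2)\bigl(1-\cos(kx)\bigr)>\frac{2}{27}\bigl(1-\cos(x)\bigr)\bigl(13+10\cos(x)+4\cos^2(x)\bigr),$$ and the constant $2/27$ is best possible (it cannot be replaced by any larger constant). *)

(* Defs.v *)
From Stdlib Require Import Reals.
Open Scope R_scope.

Fixpoint sum_1_to (f : nat -> R) (m : nat) : R :=
  match m with
  | O => 0
  | S m' => sum_1_to f m' + f (S m')
  end.

Definition lhs (n : nat) (x : R) : R :=
  sum_1_to (fun k => (INR n - INR k + 1) * (INR n - INR k + 2) * (1 - cos (INR k * x))) n.

Definition rhs_core (x : R) : R :=
  (1 - cos x) * (13 + 10 * cos x + 4 * (cos x) ^ 2).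

(* Main.v *)
Require Import Defs.
From Stdlib Require Import Reals Lra Lia.
Open Scope R_scope.

Lemma sum_ge_first (f : nat -> R) (m : nat) :
  (1 <= m)%nat -> (forall k, (1 <= k <= m)%nat -> 0 <= f k) -> sum_1_to f m >= f 1%nat.
Proof.
  induction m as [|m IH]; intros Hm Hf; [lia|].
  destruct m as [|m].
  - simpl. lra.
  - simpl sum_1_to. simpl sum_1_to in IH.
    assert (0 <= f (S (S m))) by (apply Hf; lia).
    assert (sum_1_to f m + f (S m) >= f 1%nat) by (apply IH; [lia| intros; apply Hf; lia]).
    change (sum_1_to f (S m) + f (S (S m)) >= f 1%nat). simpl. lra.
Qed.

Theorem mainTheorem7 :
  (forall (n : nat) (x : R), (1 <= n)%nat -> 0 < x < 2 * PI / 3 ->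
     lhs n x > 2 / 27 * rhs_core x)
  /\
  (forall c : R, c > 2 / 27 ->
     exists (n : nat) (x : R), (1 <= n)%nat /\ 0 < x < 2 * PI / 3 /\
       ~ (lhs n x > c * rhs_core x)).
Proof.
  split.
  - intros n x Hn Hx.
    assert (Hc1 : cos x < 1).
    { rewrite <- cos_0. apply cos_decreasing_1; try lra; pose proof PI_RGT_0; lra. }
    pose proof (COS_bound x) as Hb.
    assert (Hnr : 1 <= INR n) by (apply (le_INR 1); lia).
    unfold lhs.
    match goal with |- sum_1_to ?f n > _ => assert (H1 : sum_1_to f n >= f 1%nat) end.
    { apply sum_ge_first; [lia|]. intros k Hk.
      assert (INR k <= INR n) by (apply le_INR; lia).
      pose proof (COS_bound (INR k * x)).
      apply Rmult_le_pos; [apply Rmult_le_pos|]; lra. }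
    simpl in H1. rewrite Rmult_1_l in H1. unfold rhs_core.
    set (c := cos x) in *.
    assert (Hq : 13 + 10 * c + 4 * c ^ 2 < 27) by nra.
    assert (Hp : 2 <= (INR n - 1 + 1) * (INR n - 1 + 2)) by nra.
    assert (0 < 1 - c) by lra.
    nra.
  - intros c Hc.
    set (t := (27 * c - 2) / (9 * c)).
    assert (Ht : 0 < t) by (unfold t; apply Rdiv_lt_0_compat; lra).
    set (x := t / (t + 1)).
    assert (Hx1 : x < 1) by (unfold x; apply Rmult_lt_reg_r with (t+1); [lra|]; field_simplify; lra).
    assert (Hx0 : 0 < x) by (unfold x; apply Rdiv_lt_0_compat; lra).
    assert (Hxt : x <= t) by (unfold x; apply Rmult_le_reg_r with (t+1); [lra|]; field_simplify; nra).
    exists 1%nat, x. split; [lia|]. split.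
    { pose proof PI_RGT_0. pose proof PI2_3_2. lra. }
    pose proof (cos_bound x 0) as Hcb.
    assert (HPI : 3/2 < PI/2) by apply PI2_3_2.
    destruct Hcb as [Hcb _]; [lra|lra|].
    unfold cos_approx, cos_term in Hcb. simpl in Hcb.
    unfold lhs, rhs_core. simpl sum_1_to.
    replace (INR 1) with 1 by reflexivity. rewrite Rmult_1_l.
    set (cx := cos x) in *.
    pose proof (COS_bound x). fold cx in H.
    assert (Hcx : cx >= 1 - x^2/2) by (field_simplify in Hcb; nra).
    assert (Hx2 : x^2 <= t) by nra.
    assert (Hct : c * (27 - 9 * t) = 2) by (unfold t; field; lra).
    assert (Hq : 13 + 10 * cx + 4 * cx ^ 2 >= 27 - 9 * x^2) by nra.
    assert (Hq2 : c * (13 + 10 * cx + 4 * cx ^ 2) >= 2) by nra.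
    nra.
Qed.
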